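(* Let $\mathcal{A}$ be a finite alphabet, $n\ge0$, and $N=[1,n]=\{1,\dots,n\}$. Then (i) $|\overline{L}_{\mathcal{A}}(n)/\mathcal{S}_{\mathcal{A}}|=|\overline{G}_{\mathcal{A}}(N)/\hat{\mathcal{S}}_{\mathcal{A}}(n+1)|=|\overline{G}_{\mathcal{A}}(N)/{\sim}|=|\overline{G}_{\mathcal{A}}(N)/{\cong}|$; (ii) $|L_{\mathcal{A}}(n)/\mathcal{S}_{\mathcal{A}}|=|G_{\mathcal{A}}(N)/\hat{\mathcal{S}}_{\mathcal{A}}(n+1)|$; (iii) $|\overline{G}_{\mathcal{A}}(N)/\hat{\mathcal{S}}_{\mathcal{A}}(n+1)|\le|G_{\mathcal{A}}(N)/{\sim}|\le|G_{\mathcal{A}}(N)/{\cong}|\le|G_{\mathcal{A}}(N)/\hat{\mathcal{S}}_{\mathcal{A}}(n+1)|$.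
   Context: $L_{\mathcal{A}}(n)$ is the set of $f:\mathcal{A}^n\to\mathcal{A}$; $\overline{L}_{\mathcal{A}}(n)$ the irreducible ones (depending on every argument). $\mathcal{S}_{\mathcal{A}}=\{1,r\}\times S_{\mathcal{A}}$ ($S_{\mathcal{A}}$ the permutations of $\mathcal{A}$) acts on rules by $\hat\nu f(w)=\nu f(\nu^{-1}w)$ (letterwise) and $\hat rf(w)=f(rw)$, $r$ reversing words. For $f:\mathcal{A}^n\to\mathcal{A}$, $\Phi^N_f(x)_i=f(x_{i+1}\dots x_{i+n})$; $G_{\mathcal{A}}(N)=\{\Phi^N_f\mid f\in L_{\mathcal{A}}(n)\}$, $\overline{G}_{\mathcal{A}}(N)=\{\Phi^N_f\mid f\in\overline{L}_{\mathcal{A}}(n)\}$. Operators on global maps: $\sigma\Phi=\sigma\circ\Phi$ with $(\sigma x)_i=x_{i+1}$; $\hat\nu\Phi(x)=\nu\Phi(\nu^{-1}x)$; $\hat r\Phi(x)=r\Phi(rx)$ with $(rx)_i=x_{-i}$. $\hat{\mathcal{S}}_{\mathcal{A}}(n+1)$ is the group generated by $\sigma^{n+1}\hat r$ and all $\hat\nu$, $\nu\in S_{\mathcal{A}}$; it acts on $G_{\mathcal{A}}(N)$ and on $\overline G_{\mathcal{A}}(N)$. $\Phi\cong\Psi$ iff $\Psi=\tau\Phi$ for some $\tau$ in the group generated by $\sigma,\hat r,\hat\nu$. Scaling: for positive rational $v$ and a global map with a representation $\Phi=\Phi^M_f$, $vM\subseteq\mathbb{Z}$, put $\hat s_v\Phi=\Phi^{vM}_f$;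 $\Phi\sim\Psi$ iff there exist global maps $\Phi',\Psi'$ and a positive rational $v$ with $\Phi\cong\Phi'$, $\Psi\cong\Psi'$, $\Psi'=\hat s_v\Phi'$. For a set $X$ of global maps, $X/{\cong}$ and $X/{\sim}$ denote the classes of the restricted relations, and $X/\hat{\mathcal{S}}_{\mathcal{A}}(n+1)$ the orbits. *)

(* Defs.v *)
From HB Require Import structures.
From Stdlib Require Import Relations.
From mathcomp Require Import all_boot all_order all_algebra all_fingroup.
From mathcomp Require Import boolp.
Set Implicit Arguments. Unset Strict Implicit. Unset Printing Implicit Defensive.
Import GRing.Theory Num.Theory.

(* Counting classes.  For a finite index type I, a domain D : pred I,  *)
(* a map F : I -> T (X := F @ D is the set of objects) and a relation  *)
(* R on T, [nclasses D F R] is the number of classes of the            *)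
(* equivalence relation generated by the restriction of R to X,        *)
(* i.e. |X / R|.  (Classes are recorded through their preimages in D.) *)
Definition inX {I : finType} {T : Type} (D : pred I) (F : I -> T) (x : T) : Prop :=
  exists2 i, D i & x = F i.

Definition restr {I : finType} {T : Type} (D : pred I) (F : I -> T)
  (R : T -> T -> Prop) : T -> T -> Prop :=
  fun x y => [/\ inX D F x, inX D F y & R x y].

Definition nclasses {I : finType} {T : Type} (D : pred I) (F : I -> T)
  (R : T -> T -> Prop) : nat :=
  #|[set [set j | D j && `[< clos_refl_sym_trans T (restr D F R) (F i) (F j) >]]
      | i in [set i | D i]]|.

Inductive gen_group {T : Type} (S : (T -> T) -> Prop) : (T -> T) -> Prop :=
| gg_id : gen_group S (fun x => x)
| gg_gen : forall g, S g -> gen_group S g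
| gg_comp : forall g h, gen_group S g -> gen_group S h -> gen_group S (fun x => g (h x))
| gg_inv : forall g h, gen_group S g -> (forall x, g (h x) = x) ->
             (forall x, h (g x) = x) -> gen_group S h.

Section Rules.
Variable A : finType.
Variable n : nat.

Definition rule := {ffun n.-tuple A -> A}.

Definition irreducible (f : rule) : bool :=
  [forall i : 'I_n, [exists w : n.-tuple A, [exists a : A,
     f w != f [tuple if j == i then a else tnth w j | j < n]]]].

Definition nuhat_rule (nu : {perm A}) (f : rule) : rule :=
  [ffun w => nu (f (map_tuple (nu^-1)%g w))].

Definition rhat_rule (f : rule) : rule := [ffun w => f (rev_tuple w)].

Definition rule_orbit_rel (f g : rule) : Prop :=
  exists (nu : {perm A}) (b : bool),
    g = nuhat_rule nu (if b then rhat_rule f else f).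
End Rules.

Definition config (A : Type) := int -> A.
Definition gmap (A : Type) := config A -> config A.

(* Phi^M_f with M = {m_0 < ... < m_{k-1}} given as the tuple m *)
Definition gphi {A : Type} (k : nat) (m : k.-tuple int) (f : k.-tuple A -> A) : gmap A :=
  fun x i => f [tuple x (i + tnth m j)%R | j < k].

Definition gphiN {A : finType} (n : nat) (f : rule A n) : gmap A :=
  fun x i => f [tuple x (i + (j.+1)%:Z)%R | j < n].

Definition sigma_op {A : Type} (Phi : gmap A) : gmap A := fun x i => Phi x (i + 1)%R.
Definition rvc {A : Type} (x : config A) : config A := fun i => x (- i)%R.
Definition rhat_op {A : Type} (Phi : gmap A) : gmap A := fun x => rvc (Phi (rvc x)).
Definition nuhat_op {A : finType} (nu : {perm A}) (Phi : gmap A) : gmap A :=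
  fun x i => nu (Phi (fun j => (nu^-1)%g (x j)) i).

Definition hatS_gen {A : finType} (n : nat) (g : gmap A -> gmap A) : Prop :=
  g = (fun Phi => iter n.+1 sigma_op (rhat_op Phi)) \/ exists nu, g = nuhat_op nu.

Definition hatS_rel {A : finType} (n : nat) (Phi Psi : gmap A) : Prop :=
  exists tau, gen_group (hatS_gen n) tau /\ Psi = tau Phi.

Definition cong_gen {A : finType} (g : gmap A -> gmap A) : Prop :=
  g = sigma_op \/ g = rhat_op \/ exists nu, g = nuhat_op nu.

Definition cong {A : finType} (Phi Psi : gmap A) : Prop :=
  exists tau, gen_group cong_gen tau /\ Psi = tau Phi.

(* Psi' = hat s_v Phi' : for some representation Phi' = Phi^M_f with vM in Z,
   Psi' = Phi^{vM}_f *)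
Definition scaled {A : finType} (v : rat) (Phi' Psi' : gmap A) : Prop :=
  exists (k : nat) (m m' : k.-tuple int) (f : k.-tuple A -> A),
    [/\ sorted (fun a b : int => a < b)%R m,
        (forall j, ((tnth m' j)%:~R : rat) = (v * (tnth m j)%:~R)%R),
        Phi' = gphi m f & Psi' = gphi m' f].

Definition sim {A : finType} (Phi Psi : gmap A) : Prop :=
  exists (Phi' Psi' : gmap A) (v : rat),
    [/\ cong Phi Phi', cong Psi Psi', (0 < v)%R & scaled v Phi' Psi'].

(* Main.v *)
Require Import Defs.
From Stdlib Require Import Relations.
From mathcomp Require Import all_boot all_order all_algebra all_fingroup boolp.
From mathcomp Require Import zify.
Set Implicit Arguments. Unset Strict Implicit. Unset Printing Implicit Defensive.
Import GRing.Theory Num.Theory.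

Section Count.
Variable I : finType.

Lemma card_imset_le (f g : I -> {set I}) (S : {set I}) :
  {in S &, forall i j, g i = g j -> f i = f j} -> #|f @: S| <= #|g @: S|.
Proof.
move=> H.
pose phi (X : {set I}) := \bigcup_(i in S | g i == X) f i.
have -> : f @: S = phi @: (g @: S).
  rewrite -imset_comp; apply: eq_in_imset => i Hi /=.
  apply/setP => y; apply/idP/bigcupP.
    by move=> Hy; exists i => //; rewrite Hi eqxx.
  by move=> [j /andP[Hj /eqP Hg]]; rewrite (H j i Hj Hi Hg).
exact: leq_imset_card.
Qed.

Definition crst {T} (R : T -> T -> Prop) := clos_refl_sym_trans T R.

Lemma crst_sym T (R : T -> T -> Prop) x y : crst R x y -> crst R y x.
Proof. by move=> H; apply: rst_sym. Qed.
Lemma crst_trans T (R : T -> T -> Prop) x y z : crst R x y -> crst R y z -> crst R x z.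
Proof. by move=> H1 H2; apply: rst_trans H1 H2. Qed.

Lemma nclasses_le T1 T2 (D1 D2 : pred I) (F1 : I -> T1) (F2 : I -> T2) R1 R2 :
  (forall i, D1 i -> D2 i) ->
  (forall i j, D1 i -> D1 j -> crst (restr D2 F2 R2) (F2 i) (F2 j) ->
       crst (restr D1 F1 R1) (F1 i) (F1 j)) ->
  nclasses D1 F1 R1 <= nclasses D2 F2 R2.
Proof.
move=> H12 H.
rewrite /nclasses.
set c1 := fun i => [set j | D1 j && `[< _ >]].
set c2 := fun i => [set j | D2 j && `[< _ >]].
set S1 := [set i | D1 i].
apply: (@leq_trans #|c2 @: S1|).
  apply: card_imset_le => i j; rewrite !inE => Hi Hj E.
  have : j \in c2 j by rewrite inE H12 //=; apply/asboolP; apply: rst_refl.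
  rewrite -E inE => /andP[_ /asboolP Hc].
  have Hc1 := H i j Hi Hj Hc.
  apply/setP => l; rewrite !inE; case: (D1 l) => //=.
  apply: asbool_equiv_eq; split => Hl.
    exact: crst_trans (crst_sym Hc1) Hl.
  exact: crst_trans Hc1 Hl.
apply: subset_leq_card; apply: imsetS.
by apply/subsetP => i; rewrite !inE; apply: H12.
Qed.

Lemma crst_steps T1 T2 (D1 D2 : pred I) (F1 : I -> T1) (F2 : I -> T2) R1 R2 :
  (forall i, D1 i -> D2 i) ->
  (forall i, D2 i -> R2 (F2 i) (F2 i)) ->
  (forall i j, D1 i -> D2 j -> (R2 (F2 i) (F2 j) \/ R2 (F2 j) (F2 i)) ->
     D1 j /\ (R1 (F1 i) (F1 j) \/ R1 (F1 j) (F1 i))) ->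
  forall i j, D1 i -> D1 j -> crst (restr D2 F2 R2) (F2 i) (F2 j) ->
       crst (restr D1 F1 R1) (F1 i) (F1 j).
Proof.
move=> H12 Hrefl Hst.
have step : forall i j, D1 i -> D2 j -> (R2 (F2 i) (F2 j) \/ R2 (F2 j) (F2 i)) ->
   D1 j /\ crst (restr D1 F1 R1) (F1 i) (F1 j).
  move=> i j Hi Hj HR; have [Dj [E|E]] := Hst i j Hi Hj HR; split => //.
    by apply: rst_step; split => //; [exists i | exists j].
  by apply: rst_sym; apply: rst_step; split => //; [exists j | exists i].
have gen : forall x y, clos_refl_sym_trans_1n T2 (restr D2 F2 R2) x y ->
   forall i, D1 i -> x = F2 i -> exists j, [/\ D1 j, y = F2 j &
      crst (restr D1 F1 R1) (F1 i) (F1 j)].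
  move=> x y; elim => {x y} [x|x y z Hxy _ IH] i Hi Ex.
    by exists i; split => //; apply: rst_refl.
  have [k Dk Ek] : inX D2 F2 y by case: Hxy => -[_ ? _] //; case.
  have HR : R2 (F2 i) (F2 k) \/ R2 (F2 k) (F2 i).
    by case: Hxy => -[_ _ ?]; subst; [left|right].
  have [D1k Hk] := step i k Hi Dk HR.
  have [j [Dj Ez Hj]] := IH k D1k Ek.
  by exists j; split => //; apply: crst_trans Hk Hj.
move=> i j Hi Hj /clos_rst_rst1n_iff /gen /(_ i Hi erefl) [j' [Dj' E Hj']].
have HR : R2 (F2 j') (F2 j) by rewrite -E; apply: Hrefl; apply: H12.
have [_ H2] := step j' j Dj' (H12 _ Hj) (or_introl HR).
exact: crst_trans Hj' H2.
Qed.
End Count.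

Section Ops.
Variable A : finType.

Definition eps (b : bool) (j : int) : int := if b then (- j)%R else j.

Definition Tc (nu : {perm A}) (b : bool) (k : int) (Phi : gmap A) : gmap A :=
  fun x i => nu (Phi (fun j => (nu^-1)%g (x (eps b j))) (eps b i + k)%R).

Lemma Tc_id Phi : Tc 1%g false 0 Phi = Phi.
Proof.
apply: funext => x; apply: funext => i; rewrite /Tc /= invg1 perm1 addr0.
by congr (Phi _ _); apply: funext => j; rewrite perm1.
Qed.

Lemma eps_eps b1 b2 j : eps b1 (eps b2 j) = eps (b1 (+) b2) j.
Proof. by case: b1; case: b2; rewrite /eps /= ?opprK. Qed.

Lemma Tc_comp nu1 b1 k1 nu2 b2 k2 Phi :
  Tc nu1 b1 k1 (Tc nu2 b2 k2 Phi) = Tc (nu2 * nu1)%g (b1 (+) b2) (eps b2 k1 + k2)%R Phi.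
Proof.
apply: funext => x; apply: funext => i; rewrite /Tc permM.
congr (nu1 (nu2 (Phi _ _))).
  apply: funext => j; rewrite invMg permM eps_eps //.
by case: b1; case: b2; rewrite /eps /= ?opprD ?opprK ?addrA.
Qed.

Lemma Tc_inv nu b k Phi :
  Tc nu b k (Tc (nu^-1)%g b (- eps b k)%R Phi) = Phi.
Proof. by rewrite Tc_comp mulVg addbb subrr Tc_id. Qed.

Lemma gen_Tc (S : (gmap A -> gmap A) -> Prop) (P : {perm A} -> bool -> int -> Prop) :
  P 1%g false 0 ->
  (forall nu1 b1 k1 nu2 b2 k2, P nu1 b1 k1 -> P nu2 b2 k2 ->
      P (nu2 * nu1)%g (b1 (+) b2) (eps b2 k1 + k2)%R) ->
  (forall nu b k, P nu b k -> P (nu^-1)%g b (- eps b k)%R) ->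
  (forall g, S g -> exists nu b k, P nu b k /\ forall Phi, g Phi = Tc nu b k Phi) ->
  forall tau, gen_group S tau ->
    exists nu b k, P nu b k /\ forall Phi, tau Phi = Tc nu b k Phi.
Proof.
move=> P1 Pc Pi Hg tau; elim => {tau}.
- by exists 1%g, false, 0%R; split => // Phi; rewrite Tc_id.
- exact: Hg.
- move=> g h _ [nu1 [b1 [k1 [Hp1 E1]]]] _ [nu2 [b2 [k2 [Hp2 E2]]]].
  exists (nu2 * nu1)%g, (b1 (+) b2), (eps b2 k1 + k2)%R; split; first exact: Pc.
  by move=> Phi; rewrite E2 E1 Tc_comp.
- move=> g h _ [nu [b [k [Hp E]]]] Hgh Hhg.
  exists (nu^-1)%g, b, (- eps b k)%R; split; first exact: Pi.
  move=> Phi; rewrite -{1}(Tc_inv nu b k Phi) -E; exact: Hhg.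
Qed.

Lemma iter_sigma m (Psi : gmap A) : iter m sigma_op Psi = fun x i => Psi x (i + m%:Z)%R.
Proof.
elim: m => [|m IH] /=.
  by apply: funext => x; apply: funext => i; rewrite addr0.
rewrite IH /sigma_op; apply: funext => x; apply: funext => i.
by congr (Psi x _); rewrite -addrA; congr (_ + _)%R; rewrite intS addrC.
Qed.

Lemma sigma_Tc Phi : sigma_op Phi = Tc 1%g false 1 Phi.
Proof.
apply: funext => x; apply: funext => i; rewrite /Tc /sigma_op /= invg1 perm1.
by congr (Phi _ _); apply: funext => j; rewrite perm1.
Qed.

Lemma rhat_Tc Phi : rhat_op Phi = Tc 1%g true 0 Phi.
Proof.
apply: funext => x; apply: funext => i; rewrite /Tc /rhat_op /rvc /= invg1 perm1 addr0.
by congr (Phi _ _); apply: funext => j; rewrite perm1.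
Qed.

Lemma nuhat_Tc nu Phi : nuhat_op nu Phi = Tc nu false 0 Phi.
Proof. by apply: funext => x; apply: funext => i; rewrite /Tc /nuhat_op /= addr0. Qed.

Lemma hatgen_Tc n Phi : iter n.+1 sigma_op (rhat_op Phi) = Tc 1%g true (- (n.+1)%:Z)%R Phi.
Proof.
rewrite iter_sigma; apply: funext => x; apply: funext => i.
rewrite /Tc /rhat_op /rvc /= invg1 perm1 opprD.
by congr (Phi _ _); apply: funext => j; rewrite perm1.
Qed.

Definition Phat n (nu : {perm A}) b (k : int) : Prop := k = (if b then - (n.+1)%:Z else 0)%R.

Lemma hatS_Tc n tau : gen_group (hatS_gen n) tau ->
  exists nu b, forall Phi, tau Phi = Tc nu b (if b then - (n.+1)%:Z else 0)%R Phi.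
Proof.
move=> Ht.
have [nu [b [k [Hk E]]]] := @gen_Tc (hatS_gen n) (Phat n) erefl
  ltac:(move=> nu1 b1 k1 nu2 b2 k2; rewrite /Phat => -> ->;
        by case: b1; case: b2; rewrite /eps /= ?oppr0 ?addr0 ?add0r ?opprK ?subrr)
  ltac:(move=> nu b k; rewrite /Phat => ->; by case: b; rewrite /eps /= ?opprK ?oppr0)
  ltac:(move=> g [->|[nu ->]];
        [exists 1%g, true, (- (n.+1)%:Z)%R; split => // Phi; exact: hatgen_Tc
        |exists nu, false, 0%R; split => // Phi; exact: nuhat_Tc]) tau Ht.
by exists nu, b; rewrite -Hk.
Qed.

Lemma cong_Tc tau : gen_group cong_gen tau ->
  exists nu b k, forall Phi, tau Phi = Tc nu b k Phi.
Proof.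
move=> Ht.
have [nu [b [k [_ E]]]] := @gen_Tc cong_gen (fun _ _ _ => True) I
  (fun _ _ _ _ _ _ _ _ => I) (fun _ _ _ _ => I)
  ltac:(move=> g [->|[->|[nu ->]]];
        [exists 1%g, false, 1%R; split => // Phi; exact: sigma_Tc
        |exists 1%g, true, 0%R; split => // Phi; exact: rhat_Tc
        |exists nu, false, 0%R; split => // Phi; exact: nuhat_Tc]) tau Ht.
by exists nu, b, k.
Qed.

Lemma hatS_sub_cong n tau : gen_group (@hatS_gen A n) tau -> gen_group (@cong_gen A) tau.
Proof.
elim => {tau}.
- exact: gg_id.
- move=> g [->|[nu ->]]; last by apply: gg_gen; right; right; exists nu.
  elim: n => [|m IH] /=.
    by apply: (@gg_comp _ _ sigma_op); apply: gg_gen; [left|right;left].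
  by apply: (@gg_comp _ _ sigma_op) => //; apply: gg_gen; left.
- by move=> g h _ Hg _ Hh; apply: gg_comp.
- by move=> g h _ Hg E1 E2; apply: (gg_inv Hg).
Qed.
End Ops.

Section Rules2.
Variable A : finType.
Variable n : nat.
Implicit Types f g : rule A n.

Lemma tnth_rev T m (w : m.-tuple T) j : tnth (rev_tuple w) j = tnth w (rev_ord j).
Proof.
by rewrite (tnth_nth (tnth w j) w (rev_ord j)) (tnth_nth (tnth w j)) /= nth_rev ?size_tuple.
Qed.

Definition ruleact (nu : {perm A}) (b : bool) f : rule A n :=
  nuhat_rule nu (if b then rhat_rule f else f).

Lemma rhatK f : rhat_rule (rhat_rule f) = f.
Proof.
apply/ffunP => w; rewrite !ffunE; congr (f _); apply: eq_from_tnth => j.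
by rewrite !tnth_rev rev_ordK.
Qed.

Lemma nuhatM nu mu f : nuhat_rule nu (nuhat_rule mu f) = nuhat_rule (mu * nu)%g f.
Proof.
apply/ffunP => w; rewrite !ffunE permM; congr (nu (mu (f _))).
by apply: eq_from_tnth => j; rewrite !tnth_map invMg permM.
Qed.

Lemma nuhat1 f : nuhat_rule 1%g f = f.
Proof.
apply/ffunP => w; rewrite !ffunE perm1; congr (f _).
by apply: eq_from_tnth => j; rewrite !tnth_map invg1 perm1.
Qed.

Lemma rhat_nuhat nu f : rhat_rule (nuhat_rule nu f) = nuhat_rule nu (rhat_rule f).
Proof.
apply/ffunP => w; rewrite !ffunE; congr (nu (f _)).
by apply: eq_from_tnth => j; rewrite !(tnth_map, tnth_rev).
Qed.

Lemma ract_comp nu1 b1 nu2 b2 f :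
  ruleact nu2 b2 (ruleact nu1 b1 f) = ruleact (nu1 * nu2)%g (b1 (+) b2) f.
Proof.
rewrite /ruleact; case: b1; case: b2 => /=; rewrite ?rhat_nuhat ?rhatK nuhatM //.
Qed.

Lemma ract1 f : ruleact 1%g false f = f.
Proof. by rewrite /ruleact nuhat1. Qed.

Lemma orbE f g : rule_orbit_rel f g <-> exists nu b, g = ruleact nu b f.
Proof. by []. Qed.

Lemma orb_refl f : rule_orbit_rel f f.
Proof. by exists 1%g, false; rewrite /= nuhat1. Qed.

Lemma orb_sym f g : rule_orbit_rel f g -> rule_orbit_rel g f.
Proof.
move=> [nu [b ->]]; exists (nu^-1)%g, b.
by change (f = ruleact (nu^-1)%g b (ruleact nu b f)); rewrite ract_comp mulgV addbb ract1.
Qed.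

Lemma orb_trans f g h : rule_orbit_rel f g -> rule_orbit_rel g h -> rule_orbit_rel f h.
Proof.
move=> [nu1 [b1 ->]] [nu2 [b2 ->]]; exists (nu1 * nu2)%g, (b1 (+) b2).
by change (ruleact nu2 b2 (ruleact nu1 b1 f) = ruleact (nu1 * nu2)%g (b1 (+) b2) f); rewrite ract_comp.
Qed.

Lemma irr_nuhat nu f : irreducible f -> irreducible (nuhat_rule nu f).
Proof.
move=> /forallP Hf; apply/forallP => i.
have /existsP [w /existsP [a H]] := Hf i.
apply/existsP; exists (map_tuple nu w); apply/existsP; exists (nu a).
rewrite !ffunE (inj_eq (@perm_inj _ nu)).
have -> : map_tuple (nu^-1)%g (map_tuple nu w) = w.
  by apply: eq_from_tnth => j; rewrite !tnth_map permK.
set t := map_tuple _ _.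
have -> : t = [tuple if j == i then a else tnth w j | j < n] => //.
apply: eq_from_tnth => j; rewrite /t !(tnth_map, tnth_mktuple).
by case: (j == i); rewrite ?tnth_map permK.
Qed.

Lemma irr_rhat f : irreducible f -> irreducible (rhat_rule f).
Proof.
move=> /forallP Hf; apply/forallP => i.
have /existsP [w /existsP [a H]] := Hf (rev_ord i).
apply/existsP; exists (rev_tuple w); apply/existsP; exists a.
rewrite !ffunE.
have -> : rev_tuple (rev_tuple w) = w.
  by apply: eq_from_tnth => j; rewrite !tnth_rev rev_ordK.
set t := rev_tuple _.
have -> : t = [tuple if j == rev_ord i then a else tnth w j | j < n] => //.
apply: eq_from_tnth => j; rewrite /t !(tnth_rev, tnth_mktuple).
have -> : (rev_ord j == i) = (j == rev_ord i).
  apply/eqP/eqP => [<-|->]; by rewrite rev_ordK.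
by case: (j == rev_ord i); rewrite ?tnth_rev ?rev_ordK.
Qed.

Lemma irr_ract nu b f : irreducible f -> irreducible (ruleact nu b f).
Proof. by move=> H; apply: irr_nuhat; case: b => //; apply: irr_rhat. Qed.

Lemma irr_orb f g : rule_orbit_rel f g -> irreducible f -> irreducible g.
Proof. by move=> [nu [b ->]]; apply: irr_ract. Qed.
End Rules2.

Section Maps.
Variable A : finType.

Definition mkx k (q : k.-tuple int) (w : k.-tuple A) (a0 : A) : config A :=
  fun d => if [pick j | tnth q j == d] is Some j then tnth w j else a0.

Lemma mkx_q k (q : k.-tuple int) w a0 j :
  injective (tnth q) -> mkx q w a0 (tnth q j) = tnth w j.
Proof.
move=> Hq; rewrite /mkx; case: pickP => [j' /eqP /Hq -> //|].
by move=> /(_ j); rewrite eqxx.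
Qed.

Lemma gphi_mkx k (q : k.-tuple int) (F : k.-tuple A -> A) w a0 :
  injective (tnth q) -> gphi q F (mkx q w a0) 0 = F w.
Proof.
move=> Hq; rewrite /gphi; congr (F _); apply: eq_from_tnth => j.
by rewrite tnth_mktuple add0r mkx_q.
Qed.

Definition ptuple n (c : int) : n.-tuple int := [tuple (c + (j.+1)%:Z)%R | j < n].

Lemma ptuple_inj n c : injective (tnth (ptuple n c)).
Proof.
move=> a b; rewrite !tnth_mktuple => /addrI [] E; apply: val_inj => /=; lia.
Qed.

Lemma gphiN_ptuple n (f : rule A n) : gphiN f = gphi (ptuple n 0) f.
Proof.
apply: funext => x; apply: funext => i; rewrite /gphiN /gphi; congr (f _).
by apply: eq_from_tnth => j; rewrite !tnth_mktuple add0r.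
Qed.

Lemma gphiN_inj n (f g : rule A n) : gphiN f = gphiN g -> f = g.
Proof.
rewrite !gphiN_ptuple => E; apply/ffunP => w.
have H1 := gphi_mkx f w (f w) (@ptuple_inj n 0).
have H2 := gphi_mkx g w (f w) (@ptuple_inj n 0).
by rewrite -[LHS]H1 -[RHS]H2 E.
Qed.

Lemma TcPhi n nu b k (f : rule A n) :
  Tc nu b k (gphiN f) =
  gphi (ptuple n (if b then - k - (n.+1)%:Z else k)%R) (ruleact nu b f).
Proof.
apply: funext => x; apply: funext => i.
rewrite /Tc /gphiN /gphi /ruleact ffunE; congr (nu _).
case: b; rewrite ?ffunE; congr (f _); apply: eq_from_tnth => j;
  rewrite !(tnth_map, tnth_mktuple, tnth_rev) /eps; congr (_ (x _)).
  rewrite tnth_ord_tuple /=; have := ltn_ord j; lia.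
by rewrite tnth_ord_tuple addrA.
Qed.

Lemma TcPhiN n nu b (f : rule A n) :
  Tc nu b (if b then - (n.+1)%:Z else 0)%R (gphiN f) = gphiN (ruleact nu b f).
Proof.
rewrite TcPhi gphiN_ptuple.
by case: b; rewrite /= ?opprK ?subrr.
Qed.

Lemma orb_hatS n (f g : rule A n) :
  rule_orbit_rel f g -> hatS_rel n (gphiN f) (gphiN g).
Proof.
move=> [nu [b ->]]; change (hatS_rel n (gphiN f) (gphiN (ruleact nu b f))).
case: b.
  exists (fun Phi => nuhat_op nu (iter n.+1 sigma_op (rhat_op Phi))); split.
    apply: (@gg_comp _ _ (nuhat_op nu) (fun Phi => iter n.+1 sigma_op (rhat_op Phi)));
      apply: gg_gen; [right; exists nu|left] => //.
  rewrite hatgen_Tc (TcPhiN 1%g true) nuhat_Tc (TcPhiN nu false).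
  by rewrite ract_comp mul1g.
exists (nuhat_op nu); split; first by apply: gg_gen; right; exists nu.
by rewrite nuhat_Tc (TcPhiN nu false).
Qed.

Lemma hatS_orb n (f g : rule A n) :
  hatS_rel n (gphiN f) (gphiN g) -> rule_orbit_rel f g.
Proof.
move=> [tau [Ht E]]; have [nu [b Hb]] := hatS_Tc Ht.
rewrite Hb TcPhiN in E; exists nu, b; exact: gphiN_inj.
Qed.
End Maps.

Section Core.
Variable A : finType.

Lemma dep k k' (F : k.-tuple A -> A) (q : k.-tuple int) (H : k'.-tuple A -> A)
  (r : k'.-tuple int) (j : 'I_k) (w : k.-tuple A) (a : A) :
  F w != F [tuple if l == j then a else tnth w l | l < k] ->
  injective (tnth q) ->
  (forall x, gphi q F x 0 = gphi r H x 0) -> exists t, tnth r t = tnth q j.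
Proof.
move=> Hw Hq E.
case: (boolP [exists t, tnth r t == tnth q j]) => [/existsP [t /eqP] | /existsPn Hn].
  by exists t.
exfalso; move: Hw => /eqP; apply.
set x := mkx q w (F w).
set x' := fun d => if d == tnth q j then a else x d.
have E1 : F w = gphi q F x 0 by rewrite gphi_mkx.
have E2 : F [tuple if l == j then a else tnth w l | l < k] = gphi q F x' 0.
  rewrite /gphi; congr (F _); apply: eq_from_tnth => l.
  by rewrite !tnth_mktuple add0r /x' (inj_eq Hq) /x mkx_q.
rewrite E1 E2 !E /gphi; congr (H _); apply: eq_from_tnth => t.
by rewrite !tnth_mktuple add0r /x' (negbTE (Hn t)).
Qed.

Lemma incr_id m (t : 'I_m -> 'I_m) :
  (forall a b : 'I_m, a < b -> t a < t b) -> forall a, t a = a.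
Proof.
have low : forall (t : 'I_m -> 'I_m), (forall a b : 'I_m, a < b -> t a < t b) ->
    forall a : 'I_m, a <= t a.
  move=> t' Ht' a.
  suff : forall p (a : 'I_m), nat_of_ord a = p -> p <= t' a by apply.
  elim => [//|p IH] a' Ha'.
  have Hp : p < m by apply: ltnW; rewrite -Ha' ltn_ord.
  have := IH (Ordinal Hp) erefl; have := Ht' (Ordinal Hp) a'.
  rewrite /= Ha' ltnSn => /(_ isT) H1 H2; move: H1 H2; set u := nat_of_ord _; set v := nat_of_ord _; lia.
move=> Ht a; apply: val_inj => /=; apply/eqP; rewrite eqn_leq low // andbT.
have Hm : forall x y : 'I_m, x < y -> rev_ord (t (rev_ord x)) < rev_ord (t (rev_ord y)).
  move=> x y Hxy; have : rev_ord y < rev_ord x.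
    rewrite /=; have := ltn_ord x; have := ltn_ord y; lia.
  move=> /Ht; rewrite /=; have := ltn_ord (t (rev_ord x)); have := ltn_ord (t (rev_ord y)); lia.
have := @low (fun a => rev_ord (t (rev_ord a))) Hm (rev_ord a).
rewrite rev_ordK /= => H.
have := ltn_ord a; have := ltn_ord (t a); lia.
Qed.

Lemma core n k (F G : rule A n) (c1 c2 : int) (f' : k.-tuple A -> A)
  (m1 m2 : k.-tuple int) :
  irreducible F -> injective (tnth m1) ->
  (forall a b, tnth m1 a < tnth m1 b -> tnth m2 a < tnth m2 b)%R ->
  gphi (ptuple n c1) F = gphi m1 f' -> gphi (ptuple n c2) G = gphi m2 f' -> F = G.
Proof.
move=> HF Hm1 Hmono E1 E2.
have Hd : forall j : 'I_n, exists w a,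
    F w != F [tuple if l == j then a else tnth w l | l < n].
  by move=> j; have /existsP [w /existsP [a H]] := forallP HF j; exists w, a.
have Hs : forall j, exists t, tnth m1 t = tnth (ptuple n c1) j.
  move=> j; have [w [a Hw]] := Hd j.
  by apply: (dep Hw (@ptuple_inj n c1)) => x; rewrite E1.
have [s Hs'] := fin_all_exists Hs.
have Hf' : forall u, f' u = F [tuple tnth u (s j) | j < n].
  move=> u; have := gphi_mkx f' u (f' u) Hm1; rewrite -E1 => <-.
  rewrite /gphi; congr (F _); apply: eq_from_tnth => j.
  by rewrite tnth_mktuple add0r -Hs' mkx_q // tnth_mktuple.
set q2 := [tuple tnth m2 (s j) | j < n].
have Hq2 : forall x i, gphi m2 f' x i = gphi q2 F x i.
  move=> x i; rewrite /gphi Hf'; congr (F _); apply: eq_from_tnth => j.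
  by rewrite !tnth_mktuple.
have Hmono2 : forall a b : 'I_n, a < b -> (tnth q2 a < tnth q2 b)%R.
  move=> a b Hab; rewrite !tnth_mktuple; apply: Hmono.
  by rewrite !Hs' !tnth_mktuple ltrD2l ltz_nat.
have Hq2inj : injective (tnth q2).
  move=> a b E; case: (ltngtP a b) => H.
  - by have := Hmono2 _ _ H; rewrite E Order.POrderTheory.ltxx.
  - by have := Hmono2 _ _ H; rewrite E Order.POrderTheory.ltxx.
  - exact: val_inj.
have Ht : forall j, exists t : 'I_n, tnth (ptuple n c2) t = tnth q2 j.
  move=> j; have [w [a Hw]] := Hd j.
  by apply: (dep Hw Hq2inj) => x; rewrite -Hq2 -E2.
have [t Ht'] := fin_all_exists Ht.
have Htmono : forall a b : 'I_n, a < b -> t a < t b.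
  by move=> a b Hab; have := Hmono2 a b Hab; rewrite -!Ht' !tnth_mktuple ltrD2l ltz_nat.
have tid := incr_id Htmono.
have Hq2p : forall j, tnth q2 j = tnth (ptuple n c2) j by move=> j; rewrite -Ht' tid.
apply/ffunP => w.
have := gphi_mkx G w (F w) (@ptuple_inj n c2); rewrite E2 Hq2 => <-.
rewrite /gphi; congr (F _); apply: eq_from_tnth => j.
by rewrite tnth_mktuple add0r Hq2p mkx_q //; apply: ptuple_inj.
Qed.

Lemma cong_form n (h : rule A n) X : cong (gphiN h) X ->
  exists nu b c, X = gphi (ptuple n c) (ruleact nu b h).
Proof.
move=> [tau [Ht ->]]; have [nu [b [k E]]] := cong_Tc Ht.
by rewrite E TcPhi; eexists; eexists; eexists.
Qed.

Lemma orb_ract n (f : rule A n) nu b : rule_orbit_rel f (ruleact nu b f).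
Proof. by exists nu, b. Qed.

Lemma sim_orb n (f g : rule A n) : irreducible f ->
  sim (gphiN f) (gphiN g) \/ sim (gphiN g) (gphiN f) -> rule_orbit_rel f g.
Proof.
move=> Hf [] [Phi' [Psi' [v [C1 C2 Hv [k [m [m' [f' [Hsort Hm' EP EQ]]]]]]]]].
- have [nu1 [b1 [c1 E1]]] := cong_form C1.
  have [nu2 [b2 [c2 E2]]] := cong_form C2.
  have Hm : injective (tnth m) by apply/tuple_uniqP; apply: Order.POrderTheory.lt_sorted_uniq.
  have Heq : ruleact nu1 b1 f = ruleact nu2 b2 g.
    apply: (core (irr_ract nu1 b1 Hf) Hm _ (etrans (esym E1) EP) (etrans (esym E2) EQ)).
    by move=> a b Hab; rewrite -(ltr_int rat) !Hm' ltr_pM2l // ltr_int.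
  apply: orb_trans (orb_ract f nu1 b1) _; rewrite Heq; apply: orb_sym; exact: orb_ract.
- have [nu1 [b1 [c1 E1]]] := cong_form C1.
  have [nu2 [b2 [c2 E2]]] := cong_form C2.
  have Hm : injective (tnth m) by apply/tuple_uniqP; apply: Order.POrderTheory.lt_sorted_uniq.
  have Hm'i : injective (tnth m').
    move=> a b E; apply: Hm; apply: (@intr_inj rat); apply: (mulfI (lt0r_neq0 Hv)).
    by rewrite -!Hm' E.
  have Heq : ruleact nu2 b2 f = ruleact nu1 b1 g.
    apply: (core (irr_ract nu2 b2 Hf) Hm'i _ (etrans (esym E2) EQ) (etrans (esym E1) EP)).
    by move=> a b; rewrite -(ltr_int rat) !Hm' ltr_pM2l // ltr_int.
  apply: orb_trans (orb_ract f nu2 b2) _; rewrite Heq; apply: orb_sym; exact: orb_ract.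
Qed.

Lemma sorted_ptuple n c : sorted (fun a b : int => a < b)%R (ptuple n c).
Proof.
apply/(sortedP 0%R) => i; rewrite size_tuple => Hi.
have Hi' : i < n by lia.
rewrite -(tnth_nth 0%R (ptuple n c) (Ordinal Hi')) -(tnth_nth 0%R (ptuple n c) (Ordinal Hi)).
by rewrite !tnth_mktuple ltrD2l ltz_nat.
Qed.

Lemma cong_sim n (X : gmap A) (g : rule A n) : cong X (gphiN g) -> sim X (gphiN g).
Proof.
move=> C; exists (gphiN g), (gphiN g), 1%R; split => //.
  by exists id; split => //; apply: gg_id.
exists n, (ptuple n 0), (ptuple n 0), (fun w => g w); split.
- exact: sorted_ptuple.
- by move=> j; rewrite mul1r.
- exact: gphiN_ptuple.
- exact: gphiN_ptuple.
Qed.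

Lemma hatS_cong n (X Y : gmap A) : hatS_rel n X Y -> cong X Y.
Proof. by move=> [tau [Ht E]]; exists tau; split => //; apply: hatS_sub_cong Ht. Qed.

Lemma hatS_refl n (X : gmap A) : hatS_rel n X X.
Proof. by exists id; split => //; apply: gg_id. Qed.

Lemma cong_refl (X : gmap A) : cong X X.
Proof. by exists id; split => //; apply: gg_id. Qed.
End Core.

Lemma ncl_le (I : finType) T1 T2 (D1 D2 : pred I) (F1 : I -> T1) (F2 : I -> T2) R1 R2 :
  (forall i, D1 i -> D2 i) ->
  (forall i, D2 i -> R2 (F2 i) (F2 i)) ->
  (forall i j, D1 i -> D2 j -> (R2 (F2 i) (F2 j) \/ R2 (F2 j) (F2 i)) ->
     D1 j /\ (R1 (F1 i) (F1 j) \/ R1 (F1 j) (F1 i))) ->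
  nclasses D1 F1 R1 <= nclasses D2 F2 R2.
Proof. by move=> H12 Hr Hs; apply: nclasses_le H12 (crst_steps H12 Hr Hs). Qed.

Theorem proposition12 (A : finType) (n : nat) :
  let Lbar := @irreducible A n in
  let Lall := @predT (rule A n) in
  let Phi := @gphiN A n in
  (* (i) *)
  [/\ nclasses Lbar id (@rule_orbit_rel A n) = nclasses Lbar Phi (hatS_rel n),
      nclasses Lbar Phi (hatS_rel n) = nclasses Lbar Phi sim
    & nclasses Lbar Phi sim = nclasses Lbar Phi cong]
  (* (ii) *)
  /\ nclasses Lall id (@rule_orbit_rel A n) = nclasses Lall Phi (hatS_rel n)
  (* (iii) *)
  /\ [/\ nclasses Lbar Phi (hatS_rel n) <= nclasses Lall Phi sim,
         nclasses Lall Phi sim <= nclasses Lall Phi cong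
       & nclasses Lall Phi cong <= nclasses Lall Phi (hatS_rel n)].
Proof.
move=> Lbar Lall Phi.
have simr : forall g : rule A n, sim (Phi g) (Phi g).
  by move=> g; apply: cong_sim; apply: cong_refl.
have orb_h : forall f g : rule A n, rule_orbit_rel f g \/ rule_orbit_rel g f ->
    hatS_rel n (Phi f) (Phi g) \/ hatS_rel n (Phi g) (Phi f).
  by move=> f g [H|H]; [left|right]; apply: orb_hatS.
have h_orb : forall f g : rule A n, hatS_rel n (Phi f) (Phi g) \/ hatS_rel n (Phi g) (Phi f) ->
    rule_orbit_rel f g \/ rule_orbit_rel g f.
  by move=> f g [H|H]; [left|right]; apply: hatS_orb.
have h_sim : forall f g : rule A n, hatS_rel n (Phi f) (Phi g) \/ hatS_rel n (Phi g) (Phi f) ->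
    sim (Phi f) (Phi g) \/ sim (Phi g) (Phi f).
  by move=> f g [H|H]; [left|right]; apply: cong_sim; apply: hatS_cong H.
have c_sim : forall f g : rule A n, cong (Phi f) (Phi g) \/ cong (Phi g) (Phi f) ->
    sim (Phi f) (Phi g) \/ sim (Phi g) (Phi f).
  by move=> f g [H|H]; [left|right]; apply: cong_sim.
have h_c : forall f g : rule A n, hatS_rel n (Phi f) (Phi g) \/ hatS_rel n (Phi g) (Phi f) ->
    cong (Phi f) (Phi g) \/ cong (Phi g) (Phi f).
  by move=> f g [H|H]; [left|right]; apply: hatS_cong H.
have s_h : forall f g : rule A n, Lbar f ->
    sim (Phi f) (Phi g) \/ sim (Phi g) (Phi f) ->
    Lbar g /\ (hatS_rel n (Phi f) (Phi g) \/ hatS_rel n (Phi g) (Phi f)).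
  move=> f g Hf H; have O := sim_orb Hf H; split; first by rewrite /Lbar; apply: (irr_orb O).
  by left; apply: orb_hatS.
have hr : forall X : gmap A, hatS_rel n X X by move=> X; apply: hatS_refl.
have cr : forall X : gmap A, cong X X by move=> X; apply: cong_refl.
split; [split|split; [|split]].
- apply/eqP; rewrite eqn_leq; apply/andP; split; apply: ncl_le => //.
  + by move=> i j _ Hj /h_orb.
  + by move=> i _; apply: orb_refl.
  + by move=> i j _ Hj /orb_h.
- apply/eqP; rewrite eqn_leq; apply/andP; split; apply: ncl_le => //.
  + by move=> i j Hi Hj /(s_h i j Hi) [].
  + by move=> i j Hi Hj /h_sim.
- apply/eqP; rewrite eqn_leq; apply/andP; split; apply: ncl_le => //.
  + by move=> i j Hi Hj /c_sim.
  + by move=> i j Hi Hj /(s_h i j Hi) [_ /h_c].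
- apply/eqP; rewrite eqn_leq; apply/andP; split; apply: ncl_le => //.
  + by move=> i j _ Hj /h_orb.
  + by move=> i _; apply: orb_refl.
  + by move=> i j _ Hj /orb_h.
- by apply: ncl_le => // i j Hi _; apply: s_h.
- apply: ncl_le => //; by move=> i j Hi Hj /c_sim.
- apply: ncl_le => //; by move=> i j Hi Hj /h_c.
Qed.
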